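(* In the ring of symmetric functions (power series in $p_1,p_2,\dots$ over $\mathbb{Q}$), $$p_1\,\partial_{p_1}\Sigma\operatorname{PreLie}+\partial_{p_1}\bigl(\operatorname{Comm}\circ\Sigma\operatorname{PreLie}\bigr)=1.$$
   Context: Symmetric functions are written as (formal power series) in the power sums $p_1,p_2,\dots$ over $\mathbb{Q}$, and $\partial_{p_1}$ is the partial derivative with respect to $p_1$. $\circ$ denotes plethysm: $p_k\circ f$ is obtained from $f$ by replacing every $p_j$ by $p_{jk}$ (rational constants are fixed), and $g\circ f$ is obtained by substituting $p_k\circ f$ for $p_k$ in $g$. The suspension of $f=f(p_1,p_2,\dots)$ is $\Sigma f=-f(-p_1,-p_2,-p_3,\dots)$. $\operatorname{Comm}=\exp\bigl(\sum_{k\ge1}p_k/k\bigr)-1$. $\operatorname{PreLie}$ is the Frobenius characteristic $\sum_{n\ge1}\operatorname{ch}(\mathbb{Q}\mathcal{R}_n)$ of the permutation representations of the symmetric groups $\mathfrak{S}_n$ on the sets $\mathcal{R}_n$ of rooted trees with vertex set $\{1,\dots,n\}$; equivalently, it is the unique symmetric function without constant term satisfying $\operatorname{PreLie}=p_1\,(1+\operatorname{Comm}\circ\operatorname{PreLie})$. *)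

(* Defs.v *)
(* Symmetric functions over Q as formal power series in the
   power sums p_1, p_2, ...: a series is its coefficient function on the
   monomials p_lambda = p_{l_1} ... p_{l_r}, where a monomial is encoded by
   the partition lambda = [:: l_1; ...; l_r] (a nonincreasing seq of positive
   naturals).  Values at non-partitions are junk and ignored: two series are
   equal (sym_eq) iff their coefficients agree on all partitions. *)
From mathcomp Require Import all_boot all_order all_algebra.
Set Implicit Arguments. Unset Strict Implicit. Unset Printing Implicit Defensive.
Import Order.TTheory GRing.Theory Num.Theory.
Local Open Scope ring_scope.

Definition partn (l : seq nat) : bool := sorted geq l && all (fun k => 0 < k)%N l.

Definition sym := seq nat -> rat.

Definition sym_eq (f g : sym) : Prop := forall l, partn l -> f l = g l.

Definition sconst (c : rat) : sym := fun l => if l == [::] then c else 0.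
Definition sone : sym := sconst 1.
Definition sp1 : sym := fun l => if l == [:: 1%N] then 1 else 0.
Definition sadd (f g : sym) : sym := fun l => f l + g l.
Definition sopp (f : sym) : sym := fun l => - f l.

Fixpoint bitseqs (n : nat) : seq bitseq :=
  if n is n'.+1 then [seq b :: s | b <- [:: true; false], s <- bitseqs n']
  else [:: [::]].

Definition splits (l : seq nat) : seq (seq nat * seq nat) :=
  undup [seq (mask m l, mask (map negb m) l) | m <- bitseqs (size l)].

(* product: p_mu * p_nu = p_(mu u nu) *)
Definition smul (f g : sym) : sym :=
  fun l => \sum_(pr <- splits l) f pr.1 * g pr.2.

Definition sprod (s : seq sym) : sym := foldr smul sone s.
Definition sexpn (f : sym) (n : nat) : sym := iter n (smul f) sone.

(* exponential of a series without constant term: sum_n f^n / n! *)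
Definition sexp (f : sym) : sym :=
  fun l => \sum_(n < (sumn l).+1) sexpn f n l / ((n`!)%N)%:R.

Definition dp1 (f : sym) : sym :=
  fun l => ((count_mem 1%N l).+1)%:R * f (rcons l 1%N).

(* suspension: Sigma f = - f(-p_1, -p_2, ...) *)
Definition susp (f : sym) : sym := fun l => - ((-1) ^+ size l * f l).

(* p_k o f : replace every p_j by p_{jk}  (k >= 1) *)
Definition pk (k : nat) (f : sym) : sym :=
  fun l => if all (fun i => k %| i)%N l then f (map (fun i => i %/ k)%N l) else 0.

Fixpoint seqs_len (n d : nat) : seq (seq nat) :=
  if n is n'.+1 then [seq i :: s | i <- iota 1 d, s <- seqs_len n' d]
  else [:: [::]].
Definition parts_upto (d : nat) : seq (seq nat) :=
  [seq s <- flatten [seq seqs_len n d | n <- iota 0 d.+1]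
     | partn s && (sumn s <= d)%N].

(* plethysm g o f for f without constant term:
   g o f = sum_nu g_nu * prod_i (p_{nu_i} o f); only |nu| <= deg contributes *)
Definition pleth (g f : sym) : sym :=
  fun l => \sum_(nu <- parts_upto (sumn l)) g nu * sprod [seq pk i f | i <- nu] l.

Definition sumpk_over_k : sym := fun l => if l is [:: k] then (k%:R)^-1 else 0.
Definition Comm : sym := sadd (sexp sumpk_over_k) (sopp sone).

Definition prelie_eq (P : sym) : Prop :=
  P [::] = 0 /\ sym_eq P (smul sp1 (sadd sone (pleth Comm P))).

(* Main.v *)
Require Import Defs.
From mathcomp Require Import all_boot all_order all_algebra.
From HB Require Import structures.
From mathcomp Require Import boolp.
From Stdlib Require Import ProofIrrelevance.
From mathcomp Require Import ring zify.
Require Import Defs.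
Set Implicit Arguments. Unset Strict Implicit. Unset Printing Implicit Defensive.
Import Order.TTheory GRing.Theory Num.Theory.

Lemma geq_trans' : transitive geq.
Proof. by move=> y x z /= hyx hzy; apply: leq_trans hzy hyx. Qed.
Lemma geq_total' : total geq.
Proof. by move=> x y /=; apply: leq_total. Qed.
Lemma geq_anti' : antisymmetric geq.
Proof. by move=> x y /andP[h1 h2]; apply/eqP; rewrite eqn_leq; apply/andP; split. Qed.

Lemma partn_eq a b : partn a -> partn b -> perm_eq a b -> a = b.
Proof.
by case/andP=> sa _ /andP[sb _]; apply: (sorted_eq geq_trans' geq_anti').
Qed.

Lemma partn_sort s : all (fun k => 0 < k)%N s -> partn (sort geq s).
Proof.
move=> h; rewrite /partn (sort_sorted geq_total') /=.
by rewrite all_sort.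
Qed.

Lemma partn_sub a l : partn l -> subseq a l -> partn a.
Proof.
case/andP=> sl pl sub; rewrite /partn (subseq_sorted geq_trans' sub sl) /=.
by apply/allP=> x xa; apply: (allP pl); apply: (mem_subseq sub).
Qed.

Lemma perm_mask_split (m : bitseq) (l : seq nat) : size m = size l ->
  perm_eq l (mask m l ++ mask (map negb m) l).
Proof.
elim: l m => [|x l IH] [|b m] //= [sz].
case: b => /=; first by rewrite perm_cons IH.
rewrite -cat1s perm_sym -cat1s perm_catCA /= perm_cons perm_sym; exact: IH.
Qed.

Lemma bitseqs_size n m : m \in bitseqs n -> size m = n.
Proof.
elim: n m => [|n IH] m /=; first by rewrite inE => /eqP->.
rewrite cats0 mem_cat => /orP[]/mapP[s hs ->] /=; by rewrite IH.
Qed.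

Lemma bitseqs_all n m : size m = n -> m \in bitseqs n.
Proof.
elim: n m => [|n IH] [|b m] //= [sz].
rewrite cats0 mem_cat; case: b; apply/orP; [left|right]; apply/map_f; exact: IH.
Qed.

Lemma splitsP l a b : partn l ->
  ((a, b) \in splits l) = [&& partn a, partn b & perm_eq (a ++ b) l].
Proof.
move=> pl; rewrite /splits mem_undup; apply/idP/idP.
  case/mapP=> m /bitseqs_size sz [-> ->].
  rewrite !(partn_sub pl) ?mask_subseq //=.
  by rewrite perm_sym perm_mask_split.
case/and3P=> pa pb pab.
have sub : subseq a l.
  have h1 : subseq a (a ++ b) by apply: prefix_subseq.
  have := sorted_subseq_sort geq_total' geq_trans' h1 (andP pa).1.
  rewrite ((perm_sortP geq_total' geq_trans' geq_anti' _ _) pab) (sorted_sort geq_trans' (andP pl).1) //.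
case/subseqP: sub => m sz ea.
apply/mapP; exists m; first exact: bitseqs_all.
congr pair => //.
apply: partn_eq => //; first by apply: partn_sub pl _; apply: mask_subseq.
have := perm_mask_split sz; rewrite -ea => h.
by rewrite -(perm_cat2l a) (perm_trans pab).
Qed.

Lemma splits_uniq l : uniq (splits l).
Proof. exact: undup_uniq. Qed.

Lemma seqs_lenP n d s : (s \in seqs_len n d) = (size s == n) && all (fun i => 0 < i <= d)%N s.
Proof.
elim: n s => [|n IH] [|x s] /=; rewrite ?inE //.
  by apply/negP => /allpairsP[[i t] /= [_ _ ]].
apply/idP/idP.
  case/allpairsP=> [[i t] /= [hi ht [-> ->]]].
  move: ht; rewrite IH eqSS => /andP[-> ->]; rewrite andbT.
  by move: hi; rewrite mem_iota add1n.
case/andP=> /= sz /andP[hx hs].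
apply/allpairsP; exists (x, s) => /=; split => //.
  by rewrite mem_iota add1n.
by rewrite IH -eqSS sz hs.
Qed.

Lemma seqs_len_uniq n d : uniq (seqs_len n d).
Proof.
elim: n => [|n IH] //=.
apply: allpairs_uniq => //; first exact: iota_uniq.
by move=> [i s] [j t] _ _ /= [-> ->].
Qed.

Lemma partn_size_le s : partn s -> (size s <= sumn s)%N.
Proof.
case/andP=> _; elim: s => //= x s IH /andP[hx hs].
by rewrite -add1n leq_add // IH.
Qed.

Lemma partn_le_sumn s x : partn s -> x \in s -> (0 < x <= sumn s)%N.
Proof.
case/andP=> _; elim: s => //= y s IH /andP[hy hs]; rewrite inE => /orP[/eqP->|hx].
  by rewrite hy leq_addr.
by case/andP: (IH hs hx) => -> h; rewrite (leq_trans h) // leq_addl.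
Qed.

Lemma parts_uptoP d s : (s \in parts_upto d) = partn s && (sumn s <= d)%N.
Proof.
rewrite /parts_upto mem_filter; apply/andP/idP => [[]//|/andP[ps hs]].
split; first by rewrite ps hs.
apply/flattenP; exists (seqs_len (size s) d).
  apply/mapP; exists (size s) => //; rewrite mem_iota /= add0n ltnS.
  exact: leq_trans (partn_size_le ps) hs.
rewrite seqs_lenP eqxx /=; apply/allP => x hx.
by case/andP: (partn_le_sumn ps hx) => -> h; rewrite (leq_trans h).
Qed.

Lemma parts_upto_uniq d : uniq (parts_upto d).
Proof.
rewrite /parts_upto; apply: filter_uniq.
have: forall n, n \in iota 0 d.+1 -> forall s, s \in seqs_len n d -> size s = n.
  by move=> n _ s; rewrite seqs_lenP => /andP[/eqP].
elim: (iota 0 d.+1) (iota_uniq 0 d.+1) => //= n ns IH /andP[nn un] H.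
rewrite cat_uniq seqs_len_uniq IH ?andbT //; last first.
  by move=> k hk; apply: H; rewrite inE hk orbT.
apply/hasPn => s /flattenP[t /mapP[k hk ->] hs].
apply/negP => hs'.
have e1 := H n (mem_head _ _) s hs'.
have e2 := H k ltac:(by rewrite inE hk orbT) s hs.
by move: nn; rewrite -e1 e2 hk.
Qed.

Local Open Scope ring_scope.

Notation P_ := parts_upto.
Arguments parts_upto : simpl never.
Notation ind b := ((b : bool)%:R : rat).

Lemma sum_perm_mem (T : eqType) (s1 s2 : seq T) (F : T -> rat) :
  uniq s1 -> uniq s2 -> s1 =i s2 -> \sum_(x <- s1) F x = \sum_(x <- s2) F x.
Proof. by move=> u1 u2 e; apply: perm_big; apply: uniq_perm. Qed.

Lemma sum_pick (T : eqType) (s : seq T) (P : pred T) x0 (F : T -> rat) :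
  uniq s -> x0 \in s -> (forall x, x \in s -> P x = (x == x0)) ->
  \sum_(x <- s) ind (P x) * F x = F x0.
Proof.
move=> us xs hP; rewrite (bigD1_seq x0) //= hP // eqxx mul1r big1_seq ?addr0 //.
by move=> x /andP[hx xin]; rewrite hP // (negbTE hx) mul0r.
Qed.

Lemma sum_none (T : eqType) (s : seq T) (P : pred T) (F : T -> rat) :
  (forall x, x \in s -> ~~ P x) -> \sum_(x <- s) ind (P x) * F x = 0.
Proof. by move=> h; rewrite big1_seq // => x /h /negbTE ->; rewrite mul0r. Qed.

Lemma sumn_cat' a b : sumn (a ++ b) = (sumn a + sumn b)%N.
Proof. by elim: a => //= x a ->; rewrite addnA. Qed.

Lemma smulE f g l N M : partn l -> (sumn l <= N)%N -> (sumn l <= M)%N ->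
  smul f g l = \sum_(a <- P_ N) \sum_(b <- P_ M) ind (perm_eq (a ++ b) l) * (f a * g b).
Proof.
move=> pl hN hM.
transitivity (\sum_(p <- [seq (a, b) | a <- P_ N, b <- P_ M] | perm_eq (p.1 ++ p.2) l) f p.1 * g p.2); last first.
  rewrite big_mkcond big_allpairs; apply: eq_bigr => a _.
  by apply: eq_bigr => b _ /=; case: ifP; rewrite ?mul1r ?mul0r.
rewrite /smul -[RHS]big_filter; apply: sum_perm_mem.
- exact: splits_uniq.
- apply: filter_uniq; apply: allpairs_uniq; rewrite ?parts_upto_uniq //.
  by move=> [? ?] [? ?] _ _ /= [-> ->].
move=> [a b]; rewrite splitsP // mem_filter.
apply/and3P/andP => [[pa pb pab]|[pab]]; last first.
  case/allpairsP=> [[a' b'] /= [ha hb [ea eb]]]; subst a' b'.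
  by move: ha hb; rewrite !parts_uptoP => /andP[pa _] /andP[pb _]; split.
  split; first exact: pab.
  apply/allpairsP; exists (a, b) => /=; split => //.
    rewrite parts_uptoP pa /=; apply: leq_trans hN.
    by rewrite -(perm_sumn pab) sumn_cat' leq_addr.
  rewrite parts_uptoP pb /=; apply: leq_trans hM.
  by rewrite -(perm_sumn pab) sumn_cat' leq_addl.
Qed.

Lemma smulC f g l : partn l -> smul f g l = smul g f l.
Proof.
move=> pl; rewrite !(smulE _ _ pl (leqnn _) (leqnn _)) exchange_big /=.
apply: eq_bigr => a _; apply: eq_bigr => b _.
by rewrite perm_catC (mulrC (f b)).
Qed.

Lemma ind_and (b c : bool) : ind (b && c) = ind b * ind c.
Proof. by case: b; case: c; rewrite ?mul1r ?mul0r. Qed.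

Lemma inner3 N a b c l : partn l -> (sumn l <= N)%N -> partn a -> partn b ->
  \sum_(ab <- P_ N) ind (perm_eq (a ++ b) ab && perm_eq (ab ++ c) l) * 1
  = ind (perm_eq (a ++ b ++ c) l).
Proof.
move=> pl hN pa pb.
have [h|h] := boolP (perm_eq (a ++ b ++ c) l); last first.
  rewrite sum_none // => ab _; apply/negP => /andP[h1 h2]; move/negP: h; apply.
  by rewrite catA (perm_trans _ h2) // perm_cat2r.
have pab : partn (sort geq (a ++ b)).
  by apply: partn_sort; rewrite all_cat (andP pa).2 (andP pb).2.
rewrite (sum_pick (x0 := sort geq (a ++ b))) ?mulr1 //.
- exact: parts_upto_uniq.
- rewrite parts_uptoP pab /= (perm_sumn (permEl (perm_sort _ _))).
  by apply: leq_trans hN; rewrite -(perm_sumn h) catA !sumn_cat' leq_addr.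
move=> x; rewrite parts_uptoP => /andP[px _]; apply/andP/eqP => [[h1 _]|->].
  by apply: partn_eq => //; rewrite perm_sym (perm_trans (permEl (perm_sort _ _))).
split; first by rewrite perm_sym; exact: (permEl (perm_sort _ _)).
apply: perm_trans h; rewrite catA perm_cat2r; exact: (permEl (perm_sort _ _)).
Qed.


Lemma ex3 (T : Type) (s : seq T) (F : T -> T -> T -> rat) :
  \sum_(x <- s) \sum_(y <- s) \sum_(z <- s) F x y z =
  \sum_(y <- s) \sum_(z <- s) \sum_(x <- s) F x y z.
Proof. by rewrite exchange_big; apply: eq_bigr => y _; exact: exchange_big. Qed.

Lemma ex4 (T : Type) (s : seq T) (F : T -> T -> T -> T -> rat) :
  \sum_(x <- s) \sum_(y <- s) \sum_(z <- s) \sum_(w <- s) F x y z w =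
  \sum_(z <- s) \sum_(w <- s) \sum_(y <- s) \sum_(x <- s) F x y z w.
Proof.
transitivity (\sum_(y <- s) \sum_(z <- s) \sum_(w <- s) \sum_(x <- s) F x y z w).
  rewrite exchange_big; apply: eq_bigr => y _.
  rewrite exchange_big; apply: eq_bigr => z _; exact: exchange_big.
by rewrite exchange_big; apply: eq_bigr => z _; exact: exchange_big.
Qed.

Lemma smulA f g h l : partn l -> smul (smul f g) h l = smul f (smul g h) l.
Proof.
move=> pl; set N := sumn l.
rewrite (smulE _ _ pl (leqnn _) (leqnn _)).
rewrite [RHS](smulE _ _ pl (leqnn _) (leqnn _)).
transitivity (\sum_(a <- P_ N) \sum_(b <- P_ N) \sum_(c <- P_ N)
   ind (perm_eq (a ++ b ++ c) l) * (f a * g b * h c)).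
  transitivity (\sum_(ab <- P_ N) \sum_(c <- P_ N) \sum_(a <- P_ N) \sum_(b <- P_ N)
     ind (perm_eq (ab ++ c) l) * ind (perm_eq (a ++ b) ab) * (f a * g b * h c)).
    apply: eq_big_seq => ab hab; apply: eq_big_seq => c hc.
    move: hab; rewrite parts_uptoP => /andP[pab hab].
    rewrite (smulE _ _ pab hab hab) mulr_suml mulr_sumr; apply: eq_bigr => a _.
    rewrite mulr_suml mulr_sumr; apply: eq_bigr => b _; ring.
  rewrite ex4; apply: eq_big_seq => a ha; apply: eq_big_seq => b hb.
  apply: eq_big_seq => c hc.
  move: ha hb; rewrite !parts_uptoP => /andP[pa _] /andP[pb _].
  rewrite -(inner3 c pl (leqnn _) pa pb) mulr_suml; apply: eq_bigr => ab _.
  rewrite ind_and; ring.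
symmetry.
transitivity (\sum_(a <- P_ N) \sum_(bc <- P_ N) \sum_(b <- P_ N) \sum_(c <- P_ N)
   ind (perm_eq (a ++ bc) l) * ind (perm_eq (b ++ c) bc) * (f a * g b * h c)).
  apply: eq_big_seq => a ha; apply: eq_big_seq => bc hbc.
  move: hbc; rewrite parts_uptoP => /andP[pbc hbc].
  rewrite (smulE _ _ pbc hbc hbc) mulr_sumr mulr_sumr; apply: eq_bigr => b _.
  rewrite mulr_sumr mulr_sumr; apply: eq_bigr => c _; ring.
apply: eq_big_seq => a ha; rewrite ex3.
apply: eq_big_seq => b hb; apply: eq_big_seq => c hc.
move: hb hc; rewrite !parts_uptoP => /andP[pb _] /andP[pc _].
have e : perm_eq (a ++ b ++ c) l = perm_eq (b ++ c ++ a) l.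
  by rewrite (perm_catC a) -catA.
rewrite e -(inner3 a pl (leqnn _) pb pc) mulr_suml; apply: eq_bigr => bc _.
rewrite ind_and [perm_eq (bc ++ a) l]perm_catC; ring.
Qed.

Lemma splits_size l a b : partn l -> (a, b) \in splits l ->
  [/\ partn a, partn b & (sumn a + sumn b = sumn l)%N].
Proof.
move=> pl; rewrite splitsP // => /and3P[pa pb pab].
by rewrite -(perm_sumn pab) sumn_cat'.
Qed.

Lemma smul_local f f' g g' l : partn l ->
  (forall a, partn a -> (sumn a <= sumn l)%N -> f a = f' a) ->
  (forall a, partn a -> (sumn a <= sumn l)%N -> g a = g' a) ->
  smul f g l = smul f' g' l.
Proof.
move=> pl hf hg; apply: eq_big_seq => [[a b]] /(splits_size pl) [pa pb e] /=.
by rewrite hf ?hg // -e ?leq_addl ?leq_addr.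
Qed.

Lemma smulDl f g h l : smul (sadd f g) h l = smul f h l + smul g h l.
Proof. by rewrite /smul -big_split; apply: eq_bigr => p _; rewrite /sadd mulrDl. Qed.

Lemma smulNl f h l : smul (sopp f) h l = - smul f h l.
Proof. by rewrite /smul -sumrN; apply: eq_bigr => p _; rewrite /sopp mulNr. Qed.

Lemma sconst_mul c f l : partn l -> smul (sconst c) f l = c * f l.
Proof.
move=> pl; rewrite (smulE _ _ pl (leqnn _) (leqnn _)).
transitivity (\sum_(a <- P_ (sumn l)) ind (a == [::]) *
   (c * \sum_(b <- P_ (sumn l)) ind (perm_eq (a ++ b) l) * f b)).
  apply: eq_bigr => a _; rewrite mulr_sumr mulr_sumr; apply: eq_bigr => b _.
  by rewrite /sconst; case: (a == [::]); rewrite /= ?mul1r ?mul0r ?mulr0 //; ring.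
rewrite (sum_pick (x0 := [::])) ?parts_upto_uniq //.
congr (_ * _); rewrite (sum_pick (x0 := l)) ?parts_upto_uniq //.
  by rewrite parts_uptoP pl leqnn.
move=> x; rewrite parts_uptoP => /andP[px _] /=; apply/idP/eqP => [h|->//].
exact: partn_eq.
Qed.

Record T := mkT { fn : sym ; fnP : forall l, ~~ partn l -> fn l = 0 }.

Definition nrm (f : sym) : sym := fun l => if partn l then f l else 0.
Lemma nrmP f l : ~~ partn l -> nrm f l = 0.
Proof. by rewrite /nrm => /negbTE ->. Qed.
Definition toT (f : sym) : T := mkT (nrmP f).

Lemma fnE f l : partn l -> fn (toT f) l = f l.
Proof. by rewrite /= /nrm => ->. Qed.

Lemma T_ext (x y : T) : (forall l, partn l -> fn x l = fn y l) -> x = y.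
Proof.
case: x => f fP; case: y => g gP /= h.
have e : f = g.
  apply: funext => l.
  by case: (boolP (partn l)) => pl; [apply: h | rewrite fP ?gP].
subst g; congr mkT; apply: proof_irrelevance.
Qed.

Lemma toT_fn x : toT (fn x) = x.
Proof. by apply: T_ext => l pl; rewrite fnE. Qed.

Lemma toT_eq f g : sym_eq f g -> toT f = toT g.
Proof. by move=> h; apply: T_ext => l pl; rewrite !fnE // h. Qed.

Lemma toT_eqP f g : toT f = toT g -> sym_eq f g.
Proof. by move=> h l pl; rewrite -(fnE f pl) -(fnE g pl) h. Qed.

HB.instance Definition _ := gen_eqMixin T.
HB.instance Definition _ := gen_choiceMixin T.

Definition tzero := toT (sconst 0).
Definition tadd (x y : T) := toT (sadd (fn x) (fn y)).
Definition topp (x : T) := toT (sopp (fn x)).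
Definition tone := toT sone.
Definition tmul (x y : T) := toT (smul (fn x) (fn y)).

Lemma taddA : associative tadd.
Proof. by move=> x y z; apply: T_ext => l pl; rewrite !fnE // /sadd !fnE // addrA. Qed.
Lemma taddC : commutative tadd.
Proof. by move=> x y; apply: T_ext => l pl; rewrite !fnE // /sadd addrC. Qed.
Lemma tadd0 : left_id tzero tadd.
Proof.
move=> x; apply: T_ext => l pl; rewrite !fnE // /sadd fnE // /sconst.
by case: (l == [::]); rewrite add0r.
Qed.
Lemma taddN : left_inverse tzero topp tadd.
Proof.
move=> x; apply: T_ext => l pl; rewrite !fnE // /sadd fnE // /sopp addNr /sconst.
by case: (l == [::]).
Qed.

HB.instance Definition _ := GRing.isZmodule.Build T taddA taddC tadd0 taddN.

Lemma smul_nrm_l f g l : partn l -> smul (fn (toT f)) g l = smul f g l.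
Proof. by move=> pl; apply: smul_local => // a pa _; rewrite fnE. Qed.
Lemma smul_nrm_r f g l : partn l -> smul f (fn (toT g)) l = smul f g l.
Proof. by move=> pl; apply: smul_local => // a pa _; rewrite fnE. Qed.

Lemma tmulA : associative tmul.
Proof.
move=> x y z; apply: T_ext => l pl; rewrite !fnE //.
by rewrite smul_nrm_l // smul_nrm_r // smulA.
Qed.
Lemma tmulC : commutative tmul.
Proof. by move=> x y; apply: T_ext => l pl; rewrite !fnE // smulC. Qed.
Lemma tmul1 : left_id tone tmul.
Proof.
move=> x; apply: T_ext => l pl; rewrite !fnE // smul_nrm_l //.
by rewrite /sone sconst_mul // mul1r.
Qed.
Lemma tmulD : left_distributive tmul tadd.
Proof.
move=> x y z; apply: T_ext => l pl; rewrite !fnE // /sadd !fnE //.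
by rewrite smul_nrm_l // smulDl.
Qed.
Lemma tone0 : tone != 0.
Proof.
apply/eqP => /(congr1 (fun x => fn x [::])).
by rewrite !fnE // /sone /sconst /=.
Qed.

HB.instance Definition _ := GRing.Zmodule_isComNzRing.Build T tmulA tmulC tmul1 tmulD tone0.

Lemma fn0 l : fn 0 l = 0.
Proof. by case: (boolP (partn l)) => pl; [rewrite fnE // /sconst; case: (l == [::]) | rewrite fnP]. Qed.
Lemma fnD x y l : fn (x + y) l = fn x l + fn y l.
Proof. by case: (boolP (partn l)) => pl; [rewrite fnE | rewrite !fnP // addr0]. Qed.
Lemma fnN x l : fn (- x) l = - fn x l.
Proof. by case: (boolP (partn l)) => pl; [rewrite fnE | rewrite !fnP // oppr0]. Qed.
Lemma fnB x y l : fn (x - y) l = fn x l - fn y l.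
Proof. by rewrite fnD fnN. Qed.
Lemma fnM x y l : partn l -> fn (x * y) l = smul (fn x) (fn y) l.
Proof. exact: fnE. Qed.
Lemma fn_sum (I : Type) (r : seq I) (F : I -> T) l :
  fn (\sum_(i <- r) F i) l = \sum_(i <- r) fn (F i) l.
Proof.
elim: r => [|i r IH]; first by rewrite !big_nil fn0.
by rewrite !big_cons fnD IH.
Qed.
Lemma fn1 l : partn l -> fn 1 l = sone l.
Proof. exact: fnE. Qed.

Lemma toT_add f g : toT (sadd f g) = toT f + toT g.
Proof. by apply: T_ext => l pl; rewrite fnD !fnE. Qed.
Lemma toT_opp f : toT (sopp f) = - toT f.
Proof. by apply: T_ext => l pl; rewrite fnN !fnE. Qed.
Lemma toT_mul f g : toT (smul f g) = toT f * toT g.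
Proof.
apply: T_ext => l pl; rewrite fnM // !fnE //.
by rewrite smul_nrm_l // smul_nrm_r.
Qed.
Lemma toT_one : toT sone = 1.
Proof. by []. Qed.

Definition cst (c : rat) : T := toT (sconst c).
Lemma fn_cstM c x l : fn (cst c * x) l = c * fn x l.
Proof.
case: (boolP (partn l)) => pl; last by rewrite !fnP // mulr0.
by rewrite fnM // smul_nrm_l // sconst_mul.
Qed.
Lemma cstD a b : cst (a + b) = cst a + cst b.
Proof. by apply: T_ext => l pl; rewrite fnD !fnE // /sconst; case: (l == [::]) => //; rewrite addr0. Qed.
Lemma cstM a b : cst (a * b) = cst a * cst b.
Proof. by apply: T_ext => l pl; rewrite fn_cstM !fnE // /sconst; case: (l == [::]); rewrite ?mulr0. Qed.
Lemma cst1 : cst 1 = 1.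
Proof. by []. Qed.
Lemma cst0 : cst 0 = 0.
Proof. by []. Qed.

Definition agree (K : nat) (x y : T) :=
  forall l, partn l -> (sumn l < K)%N -> fn x l = fn y l.
Definition low (K : nat) (x : T) := forall l, partn l -> (sumn l < K)%N -> fn x l = 0.

Lemma agree_refl K x : agree K x x. Proof. by []. Qed.
Lemma agree_sym K x y : agree K x y -> agree K y x.
Proof. by move=> h l pl hl; rewrite h. Qed.
Lemma agree_trans K x y z : agree K x y -> agree K y z -> agree K x z.
Proof. by move=> h1 h2 l pl hl; rewrite h1 ?h2. Qed.
Lemma agree_le K K' x y : (K' <= K)%N -> agree K x y -> agree K' x y.
Proof. by move=> hK h l pl hl; rewrite h // (leq_trans hl). Qed.

Lemma agree_mul K x x' y y' : agree K x x' -> agree K y y' -> agree K (x * y) (x' * y').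
Proof.
move=> hx hy l pl hl; rewrite !fnM //; apply: smul_local => // a pa ha.
  exact: hx pa (leq_ltn_trans ha hl).
exact: hy pa (leq_ltn_trans ha hl).
Qed.

Lemma agree_add K x x' y y' : agree K x x' -> agree K y y' -> agree K (x + y) (x' + y').
Proof. by move=> hx hy l pl hl; rewrite !fnD hx ?hy. Qed.

Lemma agree_eq x y : (forall K, agree K x y) -> x = y.
Proof. by move=> h; apply: T_ext => l pl; apply: (h (sumn l).+1). Qed.

Lemma low_agree K x : low K x <-> agree K x 0.
Proof. by split=> h l pl hl; [rewrite fn0 h | rewrite h // fn0]. Qed.

Lemma low_mul a b x y : low a x -> low b y -> low (a + b) (x * y).
Proof.
move=> hx hy l pl hl; rewrite fnM // /smul big1_seq // => [[u v]] /=.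
case/(splits_size pl) => pu pv e.
case: (ltnP (sumn u) a) => hu; first by rewrite hx // mul0r.
rewrite hy ?mulr0 //; rewrite -e in hl.
by rewrite -(ltn_add2l (sumn u)) (leq_trans hl) // leq_add2r.
Qed.

Lemma low_le K K' x : (K' <= K)%N -> low K x -> low K' x.
Proof. by move=> hK h l pl hl; rewrite h // (leq_trans hl). Qed.

Lemma low_add K x y : low K x -> low K y -> low K (x + y).
Proof. by move=> hx hy l pl hl; rewrite fnD hx ?hy ?addr0. Qed.
Lemma low_opp K x : low K x -> low K (- x).
Proof. by move=> hx l pl hl; rewrite fnN hx ?oppr0. Qed.
Lemma low_sum K (I : Type) (r : seq I) (F : I -> T) :
  (forall i, low K (F i)) -> low K (\sum_(i <- r) F i).
Proof. by move=> h l pl hl; rewrite fn_sum big1 // => i _; apply: h. Qed.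
Lemma low_cstM K c x : low K x -> low K (cst c * x).
Proof. by move=> h l pl hl; rewrite fn_cstM h ?mulr0. Qed.
Lemma low0 K : low K 0. Proof. by move=> l _ _; rewrite fn0. Qed.

Lemma low_exp x n : low 1 x -> low n (x ^+ n).
Proof.
move=> h; elim: n => [|n IH]; first by move=> l.
by rewrite exprS -add1n; apply: low_mul.
Qed.

Definition const0 (x : T) := fn x [::] = 0.
Lemma const0_low x : const0 x <-> low 1 x.
Proof.
split=> [h l pl|h]; last by apply: h.
case: l pl => //= a l /andP[_ /andP[ha _]]; rewrite ltnS leqn0 addn_eq0.
by move: ha; rewrite lt0n => /negbTE ->.
Qed.

Lemma toT_sexpn f n : toT (sexpn f n) = toT f ^+ n.
Proof. by elim: n => [|n IH] //=; rewrite exprS -IH -toT_mul. Qed.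

Lemma fn_sexpn x n l : partn l -> sexpn (fn x) n l = fn (x ^+ n) l.
Proof. by move=> pl; rewrite -(fnE _ pl) toT_sexpn toT_fn. Qed.

Definition ifact (n : nat) : rat := ((n`!)%N%:R)^-1.
Definition En (M : nat) (x : T) : T := \sum_(n < M) cst (ifact n) * x ^+ n.
Definition E (x : T) : T := toT (sexp (fn x)).

Lemma sexp_E f l : partn l ->
  sexp f l = \sum_(n < (sumn l).+1) ifact n * fn (toT f ^+ n) l.
Proof.
move=> pl; rewrite /sexp; apply: eq_bigr => n _.
by rewrite -toT_sexpn fnE // mulrC.
Qed.

Lemma toT_sexp f : toT (sexp f) = E (toT f).
Proof. by apply: T_ext => l pl; rewrite !fnE // !sexp_E // toT_fn. Qed.

Lemma E_En M x : low 1 x -> agree M (E x) (En M x).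
Proof.
move=> hx l pl hl; rewrite fnE // sexp_E // toT_fn /En fn_sum.
under [RHS]eq_bigr => n _ do rewrite fn_cstM.
rewrite -(big_mkord xpredT (fun n => ifact n * fn (x ^+ n) l)).
rewrite -(big_mkord xpredT (fun n => ifact n * fn (x ^+ n) l)).
rewrite [RHS](big_cat_nat _ (n := (sumn l).+1)) //= [X in _ = _ + X]big1_seq ?addr0 //.
move=> n /andP[_]; rewrite mem_index_iota => /andP[hn _].
by rewrite (@low_exp x n hx) ?mulr0.
Qed.

Lemma En0 M : (0 < M)%N -> En M 0 = 1.
Proof.
case: M => // M _; rewrite /En big_ord_recl /= expr0 mulr1 /ifact /= invr1 cst1.
by rewrite big1 ?addr0 // => i _; rewrite expr0n /= mulr0.
Qed.

Lemma E0 : E 0 = 1.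
Proof.
apply: agree_eq => K; apply: (@agree_trans K _ (En K.+1 0)).
  exact: (agree_le (leqnSn K) (E_En (M:=K.+1) (@low0 1))).
by rewrite En0.
Qed.

Lemma low_E1 x : low 1 x -> fn (E x) [::] = 1.
Proof.
move=> hx; rewrite fnE // sexp_E //= big_ord_recl big_ord0 addr0 expr0 /ifact /=.
by rewrite /nrm /= invr1 mul1r.
Qed.

Lemma partn_rcons1 s : partn (rcons s 1%N) = partn s.
Proof.
rewrite /partn all_rcons /=; case: s => //= x s.
rewrite rcons_path /=; apply/idP/idP.
  by case/andP=> /andP[-> _] ->.
case/andP=> -> hall; rewrite hall andbT /=.
by have := allP (hall : all (fun k => 0 < k)%N (x :: s)) _ (mem_last x s).
Qed.

Lemma count_rcons1 s : count_mem 1%N (rcons s 1%N) = (count_mem 1%N s).+1.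
Proof. by rewrite -cats1 count_cat /= addn1. Qed.

Lemma perm_rcons1 a b l :
  perm_eq (rcons a 1%N ++ b) (rcons l 1%N) = perm_eq (a ++ b) l.
Proof.
by rewrite cat_rcons -cat1s perm_catCA /= perm_sym perm_rcons perm_cons perm_sym.
Qed.

Lemma R1 N (G : seq nat -> rat) : (forall a, 1%N \notin a -> G a = 0) ->
  \sum_(a <- P_ N.+1) G a = \sum_(a <- P_ N) G (rcons a 1%N).
Proof.
move=> hG.
transitivity (\sum_(a <- P_ N.+1 | 1%N \in a) G a).
  rewrite [RHS]big_mkcond; apply: eq_bigr => a _.
  by case: ifP => // /negbT /hG.
rewrite -big_filter -(big_map (fun a => rcons a 1%N) xpredT); apply: perm_big.
apply: uniq_perm.
- exact/filter_uniq/parts_upto_uniq.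
- rewrite map_inj_uniq ?parts_upto_uniq // => x y /rcons_inj [].
  done.
move=> a; rewrite mem_filter parts_uptoP; apply/idP/mapP.
  case/and3P=> h1 pa ha.
  exists (rem 1%N a).
    rewrite parts_uptoP (partn_sub pa (rem_subseq _ _)) /=.
    have := perm_sumn (perm_to_rem h1); rewrite /= => e.
    by rewrite -ltnS -add1n -e.
  apply: partn_eq => //; first by rewrite partn_rcons1 (partn_sub pa (rem_subseq _ _)).
  by rewrite perm_sym perm_rcons perm_sym perm_to_rem.
case=> a' ha' ->; move: ha'; rewrite parts_uptoP => /andP[pa' ha'].
by rewrite mem_rcons mem_head partn_rcons1 pa' sumn_rcons addn1 ltnS ha'.
Qed.

Definition D (x : T) : T := toT (dp1 (fn x)).

Lemma fnD1 x l : partn l -> fn (D x) l = ((count_mem 1%N l).+1)%:R * fn x (rcons l 1%N).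
Proof. by move=> pl; rewrite fnE. Qed.

Lemma half f g l : partn l ->
  \sum_(a <- P_ (sumn l).+1) \sum_(b <- P_ (sumn l).+1)
     ind (perm_eq (a ++ b) (rcons l 1%N)) * ((count_mem 1%N a)%:R * (f a * g b))
  = smul (dp1 f) g l.
Proof.
move=> pl; rewrite (smulE _ _ pl (leqnn _) (leqnSn _)) exchange_big [RHS]exchange_big /=.
apply: eq_bigr => b _; rewrite R1; last first.
  by move=> a /count_memPn ->; rewrite mulr0n !mul0r mulr0.
apply: eq_bigr => a _; rewrite perm_rcons1 count_rcons1 /dp1; ring.
Qed.

Lemma dp1_smul f g l : partn l ->
  dp1 (smul f g) l = smul (dp1 f) g l + smul f (dp1 g) l.
Proof.
move=> pl; have pL : partn (rcons l 1%N) by rewrite partn_rcons1.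
have hL : (sumn (rcons l 1%N) <= (sumn l).+1)%N by rewrite sumn_rcons addn1.
rewrite /dp1 (smulE _ _ pL hL hL) mulr_sumr.
rewrite -(half f g pl) (smulC _ _ pl) -(half g f pl).
rewrite [X in _ = _ + X]exchange_big /= -big_split; apply: eq_bigr => a _.
rewrite mulr_sumr -big_split; apply: eq_bigr => b _ /=.
rewrite (perm_catC b a).
case: (boolP (perm_eq (a ++ b) (rcons l 1%N))) => h; last first.
  rewrite /=; ring.
have e : (count_mem 1%N a + count_mem 1%N b)%N = (count_mem 1%N l).+1.
  by rewrite -count_cat (permP h) count_rcons1.
rewrite -[X in X%:R * _](count_rcons1 l) -(permP h) count_cat natrD /=; ring.
Qed.

Lemma D_mul x y : D (x * y) = D x * y + x * D y.
Proof.
apply: T_ext => l pl; rewrite fnD !fnM // !fnD1 // fnM ?partn_rcons1 //.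
by rewrite -/(dp1 _ l) dp1_smul // smul_nrm_l // smul_nrm_r.
Qed.

Lemma D_add x y : D (x + y) = D x + D y.
Proof. by apply: T_ext => l pl; rewrite fnD !fnD1 // fnD mulrDr. Qed.

Lemma D_cst c : D (cst c) = 0.
Proof.
apply: T_ext => l pl; rewrite fnD1 // fn0 fnE ?partn_rcons1 // /sconst.
by case: l {pl} => [|? ?] /=; rewrite mulr0.
Qed.

Lemma D_local K x y : agree K.+1 x y -> agree K (D x) (D y).
Proof.
move=> h l pl hl; rewrite !fnD1 // h ?partn_rcons1 //.
by rewrite sumn_rcons addn1 ltnS.
Qed.

Definition Th (x : T) : T := toT (fun l => (sumn l)%:R * fn x l).

Lemma fnTh x l : partn l -> fn (Th x) l = (sumn l)%:R * fn x l.
Proof. by move=> pl; rewrite fnE. Qed.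

Lemma Th_mul x y : Th (x * y) = Th x * y + x * Th y.
Proof.
apply: T_ext => l pl; rewrite fnD !fnM // fnTh // fnM //.
rewrite smul_nrm_l // smul_nrm_r // /smul mulr_sumr -big_split.
apply: eq_big_seq => [[a b]] /(splits_size pl) [pa pb e] /=.
by rewrite -e natrD; ring.
Qed.

Lemma Th_add x y : Th (x + y) = Th x + Th y.
Proof. by apply: T_ext => l pl; rewrite fnD !fnTh // fnD mulrDr. Qed.

Lemma Th_cst c : Th (cst c) = 0.
Proof.
apply: T_ext => l pl; rewrite fnTh // fn0 fnE // /sconst.
by case: l {pl} => [|? ?] /=; rewrite ?mul0r ?mulr0.
Qed.

Lemma Th_local K x y : agree K.+1 x y -> agree K (Th x) (Th y).
Proof. by move=> h l pl hl; rewrite !fnTh // h // ltnW. Qed.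

Definition isDer (d : T -> T) :=
  [/\ forall x y, d (x + y) = d x + d y, forall x y, d (x * y) = d x * y + x * d y,
      forall c, d (cst c) = 0 & forall K x y, agree K.+1 x y -> agree K (d x) (d y)].

Lemma D_isDer : isDer D.
Proof. split; [exact: D_add | exact: D_mul | exact: D_cst | exact: D_local]. Qed.
Lemma Th_isDer : isDer Th.
Proof. split; [exact: Th_add | exact: Th_mul | exact: Th_cst | exact: Th_local]. Qed.

Lemma der0 d : isDer d -> d 0 = 0.
Proof.
case=> hD _ _ _; have h := hD 0 0; rewrite addr0 in h.
have : d 0 + d 0 - d 0 = d 0 - d 0 by rewrite -h.
by rewrite addrK subrr.
Qed.
Lemma der1 d : isDer d -> d 1 = 0.
Proof. by case=> _ _ hc _; rewrite -cst1 hc. Qed.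
Lemma der_sum d (I : Type) (r : seq I) (F : I -> T) : isDer d ->
  d (\sum_(i <- r) F i) = \sum_(i <- r) d (F i).
Proof.
move=> hd; elim: r => [|i r IH]; first by rewrite !big_nil der0.
by case: hd => hD _ _ _; rewrite !big_cons hD IH.
Qed.
Lemma der_exp d x n : isDer d -> d (x ^+ n.+1) = (n.+1)%:R * x ^+ n * d x.
Proof.
move=> hd; elim: n => [|n IH]; first by rewrite expr1 expr0 mulr1 mul1r.
case: (hd) => _ hM _ _; rewrite exprS hM IH.
rewrite [(n.+2)%:R]mulrSr [(n.+1)%:R]mulrSr exprS; ring.
Qed.
Lemma der_cstM d c x : isDer d -> d (cst c * x) = cst c * d x.
Proof. by case=> _ hM hc _; rewrite hM hc mul0r add0r. Qed.

Lemma ifactS n : ifact n.+1 * (n.+1)%:R = ifact n.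
Proof.
rewrite /ifact factS natrM invfM mulrAC mulVf ?mul1r //.
by rewrite pnatr_eq0.
Qed.

Lemma cst_nat n : cst (n%:R) = n%:R.
Proof. by elim: n => [|n IH]; rewrite ?cst0 // -!natr1 cstD IH cst1. Qed.

Lemma der_En d M x : isDer d -> d (En M.+1 x) = En M x * d x.
Proof.
move=> hd; rewrite /En der_sum // big_ord_recl /= der_cstM // expr0 (der1 hd) mulr0 add0r.
rewrite mulr_suml; apply: eq_bigr => i _; rewrite der_cstM // der_exp //.
rewrite /bump /= add1n -[ifact i]ifactS cstM cst_nat; ring.
Qed.

Lemma der_E d x : isDer d -> low 1 x -> d (E x) = E x * d x.
Proof.
move=> hd hx; apply: agree_eq => K.
have h1 : agree K (d (E x)) (d (En K.+1 x)) by case: hd => _ _ _ hl; apply: hl; apply: E_En.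
apply: agree_trans h1 _; rewrite der_En //.
apply: agree_mul => //; apply: agree_sym.
apply: (agree_le (leqnn K)); exact: E_En.
Qed.

Lemma fn_mul_nil x y : fn (x * y) [::] = fn x [::] * fn y [::].
Proof. by rewrite fnM // /smul /splits /= big_seq1. Qed.

Lemma partn_sum0 l : partn l -> sumn l = 0%N -> l = [::].
Proof.
case: l => //= a l /andP[_ /andP[ha _]] /eqP; rewrite addn_eq0 => /andP[/eqP e _].
by rewrite e in ha.
Qed.

Lemma mul_low1_local K t u v : low 1 t -> agree K u v -> agree K.+1 (u * t) (v * t).
Proof.
move=> ht huv l pl hl; rewrite !fnM //; apply: eq_big_seq => [[a b]] /=.
case/(splits_size pl) => pa pb e.
case: (posnP (sumn b)) => hb.
  by rewrite ht ?hb // !mulr0.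
rewrite huv //; rewrite -e in hl.
lia.
Qed.

Lemma Th_unique t u v : low 1 t -> fn u [::] = fn v [::] ->
  Th u = u * t -> Th v = v * t -> u = v.
Proof.
move=> ht h0 hu hv; apply: agree_eq => K; elim: K => [|K IH]; first by move=> l.
move=> l pl; rewrite ltnS leq_eqVlt => /orP[/eqP e|hl]; last exact: IH.
case: (posnP K) => hK.
  by rewrite (partn_sum0 pl) // e hK.
have hx : forall w, fn (Th w) l = K%:R * fn w l by move=> w; rewrite fnTh // e.
have := mul_low1_local ht IH pl; rewrite e ltnSn => /(_ isT).
rewrite -hu -hv !hx => /eqP; rewrite (inj_eq (mulfI _)) ?pnatr_eq0 -?lt0n //.
by move/eqP.
Qed.

Lemma low1_Th x : low 1 (Th x).
Proof. by move=> l pl; rewrite ltnS leqn0 => /eqP e; rewrite fnTh // e mul0r. Qed.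

Lemma low1_add x y : low 1 x -> low 1 y -> low 1 (x + y).
Proof. exact: low_add. Qed.

Lemma E_add x y : low 1 x -> low 1 y -> E (x + y) = E x * E y.
Proof.
move=> hx hy.
apply: (@Th_unique (Th (x + y))); first exact: low1_Th.
- by rewrite fn_mul_nil !low_E1 ?mulr1 //; apply: low_add.
- by rewrite der_E //; [exact: Th_isDer | exact: low_add].
rewrite Th_mul (der_E Th_isDer hx) (der_E Th_isDer hy) Th_add; ring.
Qed.

Lemma E_opp x : low 1 x -> E (- x) * E x = 1.
Proof. by move=> hx; rewrite -E_add ?addNr ?E0 //; apply: low_opp. Qed.

Lemma partn_div k l : (0 < k)%N -> partn l -> all (fun i => k %| i)%N l ->
  partn (map (fun i => i %/ k)%N l).
Proof.
move=> hk /andP[sl pl] dl; rewrite /partn; apply/andP; split.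
  by apply: (homo_sorted (e := geq)) => // x y /= hxy; apply: leq_div2r.
apply/allP => _ /mapP[i hi ->]; rewrite divn_gt0 //.
by apply: dvdn_leq; [exact: (allP pl) | exact: (allP dl)].
Qed.

Lemma splits_map (h : nat -> nat) l : injective h ->
  splits (map h l) = map (fun p => (map h p.1, map h p.2)) (splits l).
Proof.
move=> hi; rewrite /splits size_map -undup_map_inj; last first.
  move=> [a b] [c d] /= [e1 e2]; congr pair; exact: (inj_map hi).
by rewrite -map_comp; congr undup; apply: eq_map => m /=; rewrite -!map_mask.
Qed.

Definition Pk (k : nat) (x : T) : T := toT (pk k (fn x)).

Lemma fnPk k x l : partn l -> fn (Pk k x) l =
  if all (fun i => k %| i)%N l then fn x (map (fun i => i %/ k)%N l) else 0.
Proof. by move=> pl; rewrite fnE. Qed.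

Lemma toT_pk k f : (0 < k)%N -> toT (pk k f) = Pk k (toT f).
Proof.
move=> hk; apply: T_ext => l pl; rewrite fnPk // fnE // /pk.
by case: ifP => // dl; rewrite fnE // partn_div.
Qed.

Lemma mapK_div k a : (0 < k)%N -> map (fun i => i %/ k)%N (map (fun i => k * i)%N a) = a.
Proof. by move=> hk; rewrite -map_comp map_id_in // => i _ /=; rewrite mulKn. Qed.

Lemma Pk_mul k x y : (0 < k)%N -> Pk k (x * y) = Pk k x * Pk k y.
Proof.
move=> hk; apply: T_ext => l pl; rewrite fnM // smul_nrm_l // smul_nrm_r // fnPk //.
case: ifP => dl.
  have pl' := partn_div hk pl dl.
  have el : l = map (fun i => k * i)%N (map (fun i => i %/ k)%N l).
    rewrite -map_comp map_id_in // => i /(allP dl) /= hi; rewrite mulnC divnK //.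
  have hinj : injective (fun i => k * i)%N.
    by move=> i j /= e; apply/eqP; rewrite -(eqn_pmul2l hk) e.
  rewrite fnM // /smul [in splits l]el (splits_map _ hinj).
  rewrite big_map; apply: eq_bigr => [[a b]] _ /=.
  have hd : forall c, all (fun i => k %| i)%N (map (fun i => k * i)%N c).
    by move=> c; rewrite all_map; apply/allP => i _ /=; apply: dvdn_mulr.
  by rewrite /pk !hd !mapK_div.
rewrite /smul big1_seq // => [[a b]] /=; rewrite splitsP // => /and3P[pa pb pab].
move: dl; rewrite -(perm_all _ pab) all_cat /pk.
by case: ifP => ha; case: ifP => hb //=; rewrite ?mul0r ?mulr0.
Qed.

Lemma Pk_add k x y : Pk k (x + y) = Pk k x + Pk k y.
Proof. by apply: T_ext => l pl; rewrite fnD !fnPk //; case: ifP; rewrite ?fnD ?addr0. Qed.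

Lemma Pk_opp k x : Pk k (- x) = - Pk k x.
Proof. by apply: T_ext => l pl; rewrite fnN !fnPk //; case: ifP; rewrite ?fnN ?oppr0. Qed.

Lemma Pk_cst k c : Pk k (cst c) = cst c.
Proof.
apply: T_ext => l pl; rewrite fnPk //; case: l pl => [|a l] pl /=; first by [].
rewrite [RHS]fnE // /sconst /=; case: ifP => // _.
by rewrite /= /nrm /sconst /=; case: ifP.
Qed.

Lemma Pk1 x : Pk 1 x = x.
Proof.
apply: T_ext => l pl; rewrite fnPk // (@eq_all _ _ predT) ?all_predT // => [|i]; last exact: dvd1n.
by rewrite map_id_in // => i _; rewrite divn1.
Qed.

Lemma D_Pk k x : (1 < k)%N -> D (Pk k x) = 0.
Proof.
move=> hk; apply: T_ext => l pl; rewrite fnD1 // fn0 fnPk ?partn_rcons1 //.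
rewrite all_rcons /= dvdn1 (gtn_eqF hk) /=; exact: mulr0.
Qed.

Lemma low_Pk k x : (0 < k)%N -> low 1 x -> low k (Pk k x).
Proof.
move=> hk hx l pl hl; rewrite fnPk //; case: ifP => // dl.
case: l pl hl dl => [|a l] pl hl dl; first by apply: hx.
move: dl => /= /andP[ha _]; move: pl => /andP[_ /andP[ha0 _]].
have := dvdn_leq ha0 ha; move: hl => /=; lia.
Qed.

(* sign change p_i -> - p_i *)
Definition Ng (x : T) : T := toT (fun l => (-1) ^+ size l * fn x l).

Lemma fnNg x l : partn l -> fn (Ng x) l = (-1) ^+ size l * fn x l.
Proof. by move=> pl; rewrite fnE. Qed.

Lemma Ng_mul x y : Ng (x * y) = Ng x * Ng y.
Proof.
apply: T_ext => l pl; rewrite fnNg // !fnM // smul_nrm_l // smul_nrm_r // /smul mulr_sumr.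
apply: eq_big_seq => [[a b]]; rewrite splitsP // => /and3P[pa pb pab] /=.
rewrite -(perm_size pab) size_cat exprD; ring.
Qed.

Lemma Ng_add x y : Ng (x + y) = Ng x + Ng y.
Proof. by apply: T_ext => l pl; rewrite fnD !fnNg // fnD mulrDr. Qed.
Lemma Ng_opp x : Ng (- x) = - Ng x.
Proof. by apply: T_ext => l pl; rewrite fnN !fnNg // fnN mulrN. Qed.

Lemma Ng_cst c : Ng (cst c) = cst c.
Proof.
apply: T_ext => l pl; rewrite fnNg // fnE // /sconst.
by case: l pl => [|a l] pl //=; rewrite ?expr0 ?mul1r ?mulr0.
Qed.

Lemma Ng_Pk k x : (0 < k)%N -> Ng (Pk k x) = Pk k (Ng x).
Proof.
move=> hk; apply: T_ext => l pl; rewrite fnNg // !fnPk //.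
case: ifP => dl; last by rewrite mulr0.
by rewrite fnNg ?partn_div // size_map.
Qed.

Definition Xt (x : T) (nu : seq nat) : T := \prod_(i <- nu) Pk i x.
Definition Pl (g x : T) : T := toT (pleth (fn g) (fn x)).

Lemma toT_sprod s : toT (sprod s) = \prod_(f <- s) toT f.
Proof. by elim: s => [|f s IH] /=; rewrite ?big_nil ?big_cons ?toT_mul ?IH. Qed.

Lemma fnPl g x l : partn l ->
  fn (Pl g x) l = \sum_(nu <- P_ (sumn l)) fn g nu * fn (Xt x nu) l.
Proof.
move=> pl; rewrite fnE //; apply: eq_bigr => nu _.
by rewrite -(fnE _ pl) toT_sprod big_map.
Qed.

Lemma partn_pos nu i : partn nu -> i \in nu -> (0 < i)%N.
Proof. by case/andP=> _ /allP; apply. Qed.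

Lemma toT_pleth g f : toT (pleth g f) = Pl (toT g) (toT f).
Proof.
apply: T_ext => l pl; rewrite fnPl // fnE //; apply: eq_big_seq => nu.
rewrite parts_uptoP => /andP[pnu _]; rewrite fnE //.
rewrite -(fnE _ pl) toT_sprod big_map /Xt; congr (_ * fn _ l).
by apply: eq_big_seq => i hi; rewrite toT_pk // (partn_pos pnu hi).
Qed.

Lemma P_ext N M (F : seq nat -> rat) : (M <= N)%N ->
  (forall nu, partn nu -> (M < sumn nu)%N -> F nu = 0) ->
  \sum_(nu <- P_ N) F nu = \sum_(nu <- P_ M) F nu.
Proof.
move=> hMN hF.
transitivity (\sum_(nu <- P_ N | (sumn nu <= M)%N) F nu).
  rewrite [RHS]big_mkcond; apply: eq_big_seq => nu; rewrite parts_uptoP => /andP[pnu _].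
  by case: leqP => // h; rewrite hF.
rewrite -big_filter; apply: perm_big; apply: uniq_perm.
- exact/filter_uniq/parts_upto_uniq.
- exact: parts_upto_uniq.
move=> nu; rewrite mem_filter !parts_uptoP.
case: (boolP (sumn nu <= M)%N) => h; last by rewrite andbF.
by rewrite (leq_trans h hMN) andbT.
Qed.

Lemma low_Xt x nu : low 1 x -> partn nu -> low (sumn nu) (Xt x nu).
Proof.
move=> hx; elim: nu => [|i nu IH] pnu; first by move=> l.
rewrite /Xt big_cons /=; apply: low_mul.
  by apply: low_Pk => //; apply: (partn_pos pnu (mem_head _ _)).
apply: IH; apply: (partn_sub pnu); exact: subseq_cons.
Qed.

Lemma Pl_expand g x l N : low 1 x -> partn l -> (sumn l <= N)%N ->
  fn (Pl g x) l = \sum_(nu <- P_ N) fn g nu * fn (Xt x nu) l.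
Proof.
move=> hx pl hN; rewrite fnPl // (P_ext hN) // => nu pnu h.
by rewrite (low_Xt hx pnu) ?mulr0.
Qed.

Lemma Xt_perm x a b : perm_eq a b -> Xt x a = Xt x b.
Proof. exact: perm_big. Qed.
Lemma Xt_cat x a b : Xt x (a ++ b) = Xt x a * Xt x b.
Proof. exact: big_cat. Qed.

Lemma Pl_mul g h x : low 1 x -> Pl (g * h) x = Pl g x * Pl h x.
Proof.
move=> hx; apply: T_ext => l pl; set N := sumn l.
pose Y g := \sum_(a <- P_ N) cst (fn g a) * Xt x a.
have hY : forall g, agree N.+1 (Pl g x) (Y g).
  move=> g' l' pl' hl'; rewrite (Pl_expand _ hx pl' hl') /Y fn_sum.
  by apply: eq_bigr => a _; rewrite fn_cstM.
rewrite (agree_mul (hY g) (hY h) pl (ltnSn _)).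
have -> : Y g * Y h = \sum_(a <- P_ N) \sum_(b <- P_ N)
    cst (fn g a * fn h b) * (Xt x a * Xt x b).
  rewrite /Y mulr_suml; apply: eq_bigr => a _; rewrite mulr_sumr.
  by apply: eq_bigr => b _; rewrite cstM; ring.
rewrite !fn_sum fnPl //.
transitivity (\sum_(nu <- P_ N) \sum_(a <- P_ N) \sum_(b <- P_ N)
   ind (perm_eq (a ++ b) nu) * (fn g a * fn h b * fn (Xt x nu) l)).
  apply: eq_big_seq => nu; rewrite parts_uptoP => /andP[pnu hnu].
  rewrite fnM // (smulE _ _ pnu hnu hnu) mulr_suml; apply: eq_bigr => a _.
  by rewrite mulr_suml; apply: eq_bigr => b _; ring.
rewrite ex3; apply: eq_big_seq => a; rewrite parts_uptoP => /andP[pa _].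
rewrite fn_sum; apply: eq_big_seq => b; rewrite parts_uptoP => /andP[pb _].
rewrite fn_cstM.
case: (leqP (sumn a + sumn b) N) => hab.
  have ps : partn (sort geq (a ++ b)).
    by apply: partn_sort; rewrite all_cat (andP pa).2 (andP pb).2.
  rewrite (sum_pick (x0 := sort geq (a ++ b))).
  - by rewrite (Xt_perm _ (permEl (perm_sort _ _))) Xt_cat.
  - exact: parts_upto_uniq.
  - by rewrite parts_uptoP ps (perm_sumn (permEl (perm_sort _ _))) sumn_cat'.
  move=> nu; rewrite parts_uptoP => /andP[pnu _]; apply/idP/eqP => [hp|->].
    apply: partn_eq => //; apply: perm_trans (_ : perm_eq nu (a ++ b)) _.
      by rewrite perm_sym.
    by rewrite perm_sym; exact: (permEl (perm_sort _ _)).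
  by rewrite perm_sym; exact: (permEl (perm_sort _ _)).
rewrite sum_none.
  by rewrite (low_mul (low_Xt hx pa) (low_Xt hx pb) pl hab) mulr0.
move=> nu; rewrite parts_uptoP => /andP[_ hnu]; apply/negP => hp.
by move: hnu; rewrite -(perm_sumn hp) sumn_cat' leqNgt hab.
Qed.

Lemma Pl_add g h x : Pl (g + h) x = Pl g x + Pl h x.
Proof.
apply: T_ext => l pl; rewrite fnD !fnPl // -big_split.
by apply: eq_bigr => nu _; rewrite fnD mulrDl.
Qed.

Lemma Pl_cst c x : Pl (cst c) x = cst c.
Proof.
apply: T_ext => l pl; rewrite fnPl //.
rewrite (eq_big_seq (fun nu => ind (nu == [::]) * (c * fn (Xt x nu) l))); last first.
  move=> nu; rewrite parts_uptoP => /andP[pnu _]; rewrite fnE // /sconst.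
  by case: (nu == [::]); rewrite /= ?mul1r ?mul0r.
rewrite (sum_pick (x0 := [::])) ?parts_upto_uniq //.
by rewrite /Xt big_nil fn1 // fnE // /sconst /sone /sconst; case: (l == [::]); rewrite ?mulr1 ?mulr0.
Qed.

Lemma Pl_one x : Pl 1 x = 1.
Proof. by rewrite -cst1 Pl_cst. Qed.

Lemma Pl_local K g g' x : agree K g g' -> agree K (Pl g x) (Pl g' x).
Proof.
move=> h l pl hl; rewrite !fnPl //; apply: eq_big_seq => nu.
rewrite parts_uptoP => /andP[pnu hnu]; rewrite h // (leq_ltn_trans hnu hl) //.
Qed.

Lemma low1_Pl g x : low 1 g -> low 1 (Pl g x).
Proof.
move=> hg l pl hl; rewrite fnPl // big1_seq // => nu /andP[_]; rewrite parts_uptoP.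
by case/andP=> pnu hnu; rewrite hg ?mul0r // (leq_ltn_trans hnu hl).
Qed.

Lemma Pl_exp g x n : low 1 x -> Pl (g ^+ n) x = Pl g x ^+ n.
Proof.
move=> hx; elim: n => [|n IH]; first by rewrite !expr0 Pl_one.
by rewrite !exprS Pl_mul // IH.
Qed.

Lemma Pl_sum (I : Type) (r : seq I) (F : I -> T) x :
  Pl (\sum_(i <- r) F i) x = \sum_(i <- r) Pl (F i) x.
Proof.
elim: r => [|i r IH]; first by rewrite !big_nil -cst0 Pl_cst.
by rewrite !big_cons Pl_add IH.
Qed.

Lemma Pl_En M g x : low 1 x -> Pl (En M g) x = En M (Pl g x).
Proof.
move=> hx; rewrite /En Pl_sum; apply: eq_bigr => n _.
by rewrite Pl_mul // Pl_cst Pl_exp.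
Qed.

Lemma Pl_E g x : low 1 g -> low 1 x -> Pl (E g) x = E (Pl g x).
Proof.
move=> hg hx; apply: agree_eq => K.
apply: (@agree_trans K _ (Pl (En K g) x)); first by apply: Pl_local; exact: E_En.
rewrite Pl_En //; apply: agree_sym; apply: E_En; exact: low1_Pl.
Qed.

Lemma Ng_Xt x nu : partn nu -> Ng (Xt x nu) = Xt (Ng x) nu.
Proof.
elim: nu => [|i nu IH] pnu; first by rewrite /Xt !big_nil -cst1 Ng_cst.
rewrite /Xt !big_cons Ng_mul Ng_Pk ?(partn_pos pnu (mem_head _ _)) //.
by rewrite -/(Xt _ _) IH // (partn_sub pnu (subseq_cons _ _)).
Qed.

Lemma Ng_Pl g x : Ng (Pl g x) = Pl g (Ng x).
Proof.
apply: T_ext => l pl; rewrite fnNg // !fnPl // mulr_sumr; apply: eq_big_seq => nu.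
rewrite parts_uptoP => /andP[pnu _]; rewrite -Ng_Xt // fnNg //; ring.
Qed.

Definition s0 : T := toT sumpk_over_k.

Lemma low_s0 : low 1 s0.
Proof.
move=> l pl; rewrite ltnS leqn0 => /eqP e; rewrite (partn_sum0 pl e) fnE //.
Qed.

Definition G (x : T) (l nu : seq nat) : rat :=
  if nu is [:: k] then (k%:R)^-1 * fn (Pk k x) l else 0.

Lemma fn_Pl_s0 x l : partn l -> fn (Pl s0 x) l = \sum_(nu <- P_ (sumn l)) G x l nu.
Proof.
move=> pl; rewrite fnPl //; apply: eq_big_seq => nu; rewrite parts_uptoP => /andP[pnu _].
rewrite fnE // /G /sumpk_over_k; case: nu pnu => [|k [|k' nu]] pnu; rewrite ?mul0r //.
by rewrite /Xt big_seq1.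
Qed.

Lemma Pl_s0_opp x : Pl s0 (- x) = - Pl s0 x.
Proof.
apply: T_ext => l pl; rewrite fnN !fn_Pl_s0 // -sumrN; apply: eq_bigr => nu _.
by rewrite /G; case: nu => [|k [|? ?]]; rewrite ?oppr0 // Pk_opp fnN mulrN.
Qed.

Lemma D_Pl_s0 x : D (Pl s0 x) = D x.
Proof.
apply: T_ext => l pl; rewrite !fnD1 //; congr (_ * _).
have pL : partn (rcons l 1%N) by rewrite partn_rcons1.
rewrite fn_Pl_s0 // (bigD1_seq [:: 1%N]) ?parts_upto_uniq //=; last first.
  by rewrite parts_uptoP /= sumn_rcons addn1.
rewrite big1 ?addr0.
  rewrite /G invr1 mul1r; change (fn (Pk 1 x) (rcons l 1%N) = fn x (rcons l 1%N)).
  by rewrite Pk1.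
move=> nu hnu; rewrite /G; case: nu hnu => [|k [|? ?]] // hk.
rewrite fnPk // all_rcons /= dvdn1.
have -> : (k == 1%N) = false by apply/negbTE; move: hk; apply: contra => /eqP ->.
by rewrite /= mulr0.
Qed.

Lemma cstN1 : cst (-1) = -1.
Proof. by apply/eqP; rewrite -subr_eq0 opprK -cst1 -cstD addNr cst0. Qed.

Lemma toT_Comm : toT Comm = E s0 + cst (-1).
Proof.
rewrite /Comm toT_add toT_opp toT_sexp toT_one cstN1 //.
Qed.

Definition C (x : T) := Pl (toT Comm) x.

Lemma C_E x : low 1 x -> 1 + C x = E (Pl s0 x).
Proof.
move=> hx; rewrite /C toT_Comm Pl_add Pl_cst Pl_E //; last exact: low_s0.
by rewrite cstN1; ring.
Qed.

Definition p1 : T := toT sp1.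

Lemma D_p1 : D p1 = 1.
Proof.
apply: T_ext => l pl; rewrite fnD1 // fnE ?partn_rcons1 // fn1 // /sp1 /sone /sconst.
case: l pl => [|a l] pl /=; first by rewrite mulr1.
have -> : (a :: rcons l 1%N == [:: 1%N]) = false.
  by apply/eqP => /(congr1 size); rewrite /= size_rcons.
by rewrite mulr0.
Qed.

Lemma Ng_p1 : Ng p1 = - p1.
Proof.
apply: T_ext => l pl; rewrite fnNg // fnN fnE // /sp1.
case: ifP => [/eqP -> /=|_]; first by rewrite expr1 mulN1r.
by rewrite mulr0 oppr0.
Qed.

Lemma toT_dp1 f : toT (dp1 f) = D (toT f).
Proof. by apply: T_ext => l pl; rewrite fnD1 // !fnE ?partn_rcons1. Qed.

Lemma toT_susp f : toT (susp f) = - Ng (toT f).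
Proof. by apply: T_ext => l pl; rewrite fnN fnNg // !fnE. Qed.

Lemma part2 P : prelie_eq P ->
  sym_eq (sadd (smul sp1 (dp1 (susp P))) (dp1 (pleth Comm (susp P)))) sone.
Proof.
case=> P0 HP; apply: toT_eqP.
set x := toT P; set q := toT (susp P).
have lx : low 1 x by apply/const0_low; rewrite /const0 fnE.
have hx : x = p1 * (1 + C x).
  by rewrite {1}/x (toT_eq HP) toT_mul toT_add toT_one toT_pleth.
have eq : q = - Ng x by rewrite /q toT_susp.
have lq : low 1 q by rewrite eq; apply: low_opp => l pl hl; rewrite fnNg // lx ?mulr0.
have hq : q = p1 * (1 + C (- q)).
  rewrite eq {1}hx Ng_mul Ng_p1 Ng_add -cst1 Ng_cst cst1 /C Ng_Pl -/(C _).
  rewrite -[Ng x]opprK -eq !opprK -/(C _); ring.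
set W := Pl s0 q.
have lW : low 1 W by apply: low1_Pl; exact: low_s0.
have hq2 : q * E W = p1.
  rewrite {1}hq C_E; last exact: low_opp.
  by rewrite Pl_s0_opp -/W -mulrA E_opp // mulr1.
have hD : D q * E W + q * (E W * D q) = 1.
  by rewrite -D_p1 -hq2 D_mul (der_E D_isDer lW) D_Pl_s0.
rewrite toT_add toT_mul toT_dp1 toT_dp1 -/q toT_pleth -/q -/(C q) toT_one.
have -> : C q = E W - 1 by rewrite -(C_E lq); ring.
rewrite D_add -cstN1 D_cst addr0 (der_E D_isDer lW) D_Pl_s0 -/p1 -hq2 -hD; ring.
Qed.

Lemma sumn_div k l : (0 < k)%N -> (sumn (map (fun i => i %/ k)%N l) <= sumn l)%N.
Proof.
move=> hk; elim: l => //= a l IH; apply: leq_add => //.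
exact: leq_div.
Qed.

Lemma Pk_agree K k x x' : (0 < k)%N -> agree K x x' -> agree K (Pk k x) (Pk k x').
Proof.
move=> hk h l pl hl; rewrite !fnPk //; case: ifP => // dl.
by rewrite h ?partn_div // (leq_ltn_trans (sumn_div _ hk) hl).
Qed.

Lemma Xt_agree K x x' nu : partn nu -> agree K x x' -> agree K (Xt x nu) (Xt x' nu).
Proof.
move=> pnu h; elim: nu pnu => [|i nu IH] pnu; first by rewrite /Xt !big_nil.
rewrite /Xt !big_cons; apply: agree_mul.
  by apply: Pk_agree => //; apply: (partn_pos pnu (mem_head _ _)).
by apply: IH; apply: (partn_sub pnu (subseq_cons _ _)).
Qed.

Lemma Pl_agree K g x x' : agree K x x' -> agree K (Pl g x) (Pl g x').
Proof.
move=> h l pl hl; rewrite !fnPl //; apply: eq_big_seq => nu.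
rewrite parts_uptoP => /andP[pnu _]; by rewrite (Xt_agree pnu h).
Qed.

Definition Fp (P : sym) : sym := smul sp1 (sadd sone (pleth Comm P)).

Lemma Fp_local (P P' : sym) m :
  (forall a, partn a -> (sumn a < m)%N -> P a = P' a) ->
  forall l, partn l -> (sumn l <= m)%N -> Fp P l = Fp P' l.
Proof.
move=> h l pl hl; apply: eq_big_seq => [[a b]] hab /=.
have [pa pb e] := splits_size pl hab.
rewrite /sp1; case: eqP => [ea|]; last by rewrite !mul0r.
congr (_ * _); rewrite /sadd; congr (_ + _).
rewrite -(fnE _ pb) -[in RHS](fnE _ pb) !toT_pleth.
apply: (Pl_agree (K := m)) => //.
  by move=> u pu hu; rewrite !fnE // h.
by move: e hl; rewrite ea /=; lia.
Qed.

Definition Pn (n : nat) : sym := iter n Fp (fun _ => 0).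

Lemma Pn_step n : forall l, partn l -> (sumn l < n)%N -> Pn n.+1 l = Pn n l.
Proof.
elim: n => [//|n IH] l pl hl.
rewrite [LHS]/= [RHS]/=; apply: (Fp_local (m := n)) => //.
Qed.

Lemma Pn_stable n k : (n <= k)%N -> forall l, partn l -> (sumn l < n)%N -> Pn k l = Pn n l.
Proof.
elim: k => [|k IH] hk l pl hl; first by move: hk; rewrite leqn0 => /eqP ->.
case: (leqP n k) => h.
  by rewrite Pn_step ?IH // (leq_trans hl h).
have -> : n = k.+1 by apply/eqP; rewrite eqn_leq hk h.
by [].
Qed.

Definition Pstar : sym := fun l => Pn (sumn l).+1 l.

Lemma Pstar_eq : prelie_eq Pstar.
Proof.
split.
  by rewrite /Pstar /= /Fp /smul /splits /= big_seq1 /sp1 /= mul0r.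
move=> l pl; rewrite /Pstar [LHS]/=.
apply: (Fp_local (m := sumn l)) => // a pa ha.
rewrite (Pn_stable (n := (sumn a).+1) (k := sumn l)) //.
Qed.

Theorem mainTheorem3 :
  (exists P : sym, prelie_eq P) /\
  forall P : sym, prelie_eq P ->
    sym_eq (sadd (smul sp1 (dp1 (susp P))) (dp1 (pleth Comm (susp P)))) sone.
Proof.
split; first by exists Pstar; exact: Pstar_eq.
exact: part2.
Qed.
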